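(* Let $V$ be a finite set and $A,B\subseteq V$ with $A\cap B\neq\emptyset$, and let $\lambda,\lambda'\in\mathbb{C}$. Then $$f_A^{(\lambda)}f_B^{(\lambda)}=\begin{cases}f_{A\cup B}^{(\lambda)}&\text{if }|A\cap B|=1,\\0&\text{if }|A\cap B|\ge2,\end{cases}$$ and more generally $$f_A^{(\lambda)}f_B^{(\lambda')}=\begin{cases}f_{A\cup B}^{(\lambda'')}&\text{if }|A\cap B|=1,\\0&\text{if }|A\cap B|\ge2,\end{cases}\qquad \lambda''=\frac{(|A|-1)\lambda+(|B|-1)\lambda'}{|A|+|B|-2}=\frac{(|A|-1)\lambda+(|B|-1)\lambda'}{|A\cup B|-1}.$$
   Context: For each $i\in V$ let $\psi_i,\bar\psi_i$ be anticommuting generators of a Grassmann algebra over $\mathbb{C}$. For $A\subseteq V$, $\tau_A=\prod_{i\in A}\bar\psi_i\psi_i$ ($\tau_\emptyset=1$), and for $\lambda\in\mathbb{C}$, $f_A^{(\lambda)}=\lambda(1-|A|)\tau_A+\sum_{i\in A}\tau_{A\setminus\{i\}}-\sum_{i,j\in A,\ i\neq j}\bar\psi_i\psi_j\,\tau_{A\setminus\{i,j\}}$. *)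

(* Defs.v *)
From HB Require Import structures.
From mathcomp Require Import all_boot all_order all_algebra.
From mathcomp Require Import reals complex.
Set Implicit Arguments. Unset Strict Implicit. Unset Printing Implicit Defensive.
Import Order.TTheory GRing.Theory Num.Theory.
Local Open Scope ring_scope.

(* Grassmann (exterior) algebra over a field F on a finite set G of
   anticommuting generators, realized concretely on the basis of monomials
   e_S (S : {set G}), where e_S = g_{s1} ... g_{sk} with s1 < ... < sk in the
   enumeration order of G.  An element is its coefficient function. *)
Section Grassmann.
Variables (F : fieldType) (G : finType).

Local Notation grass := {ffun {set G} -> F}.

(* sign of e_S e_T = (-1)^{#{(s,t) : s in S, t in T, t < s}} e_{S u T}
   when S, T disjoint *)
Definition gsign (S T : {set G}) : F :=
  (-1) ^+ #|[set p : G * G | [&& p.1 \in S, p.2 \in T &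
                                 (enum_rank p.2 < enum_rank p.1)%N]]|.

Definition gmul (x y : grass) : grass :=
  [ffun U : {set G} => \sum_(S : {set G}) \sum_(T : {set G} |
       (S :|: T == U) && [disjoint S & T]) gsign S T * x S * y T].

Definition gscale (c : F) (x : grass) : grass := [ffun U : {set G} => c * x U].

Definition gone : grass := [ffun U : {set G} => (U == set0)%:R].

Definition ggen (g : G) : grass := [ffun U : {set G} => (U == [set g])%:R].

End Grassmann.

Section Fermions.
Variables (F : fieldType) (V : finType).

Definition psi (i : V) : {ffun {set (bool * V)%type} -> F} := ggen F (false, i).
Definition psibar (i : V) : {ffun {set (bool * V)%type} -> F} := ggen F (true, i).

Definition tau (A : {set V}) : {ffun {set (bool * V)%type} -> F} :=
  \big[@gmul F _/gone F _]_(i in A) gmul (psibar i) (psi i).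

Definition fA (lam : F) (A : {set V}) : {ffun {set (bool * V)%type} -> F} :=
  gscale (lam * (1 - #|A|%:R)) (tau A)
  + \sum_(i in A) tau (A :\ i)
  - \sum_(i in A) \sum_(j in A | j != i)
        gmul (gmul (psibar i) (psi j)) (tau (A :\ i :\ j)).

End Fermions.

(* Main.v *)
Require Import Defs.
From HB Require Import structures.
From mathcomp Require Import all_boot all_order all_algebra.
From mathcomp Require Import reals complex.
From mathcomp Require Import ring zify.
Set Implicit Arguments. Unset Strict Implicit. Unset Printing Implicit Defensive.
Import Order.TTheory GRing.Theory Num.Theory.
Local Open Scope ring_scope.

Section GrassBasics.
Variables (F : fieldType) (G : finType).
Local Notation GA := {ffun {set G} -> F}.
Implicit Types (x y z : GA) (S T U W : {set G}).

Definition e S : GA := [ffun U => (U == S)%:R].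

Lemma expand x : x = \sum_S gscale (x S) (e S).
Proof.
apply/ffunP => U; rewrite sum_ffunE (bigD1 U) //= big1 ?addr0.
  by rewrite !ffunE eqxx mulr1.
by move=> S /negbTE SU; rewrite !ffunE eq_sym SU mulr0.
Qed.

Lemma gmulDl x y z : gmul (x + y) z = gmul x z + gmul y z.
Proof.
apply/ffunP => U; rewrite !ffunE -big_split /=; apply: eq_bigr => S _.
rewrite -big_split /=; apply: eq_bigr => T _; rewrite !ffunE; ring.
Qed.

Lemma gmulDr x y z : gmul x (y + z) = gmul x y + gmul x z.
Proof.
apply/ffunP => U; rewrite !ffunE -big_split /=; apply: eq_bigr => S _.
rewrite -big_split /=; apply: eq_bigr => T _; rewrite !ffunE; ring.
Qed.

Lemma gmulZl a x y : gmul (gscale a x) y = gscale a (gmul x y).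
Proof.
apply/ffunP => U; rewrite !ffunE mulr_sumr; apply: eq_bigr => S _.
rewrite mulr_sumr; apply: eq_bigr => T _; rewrite !ffunE; ring.
Qed.

Lemma gmulZr a x y : gmul x (gscale a y) = gscale a (gmul x y).
Proof.
apply/ffunP => U; rewrite !ffunE mulr_sumr; apply: eq_bigr => S _.
rewrite mulr_sumr; apply: eq_bigr => T _; rewrite !ffunE; ring.
Qed.

Lemma gmul0l x : gmul 0 x = 0.
Proof. by apply/ffunP=> U; rewrite !ffunE big1 // => S _; rewrite big1 // => T _; rewrite ffunE mulr0 mul0r. Qed.
Lemma gmul0r x : gmul x 0 = 0.
Proof. by apply/ffunP=> U; rewrite !ffunE big1 // => S _; rewrite big1 // => T _; rewrite ffunE mulr0. Qed.

Lemma gmul_suml (I : Type) (r : seq I) (P : pred I) (f : I -> GA) y :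
  gmul (\sum_(i <- r | P i) f i) y = \sum_(i <- r | P i) gmul (f i) y.
Proof. by elim/big_rec2: _ => [|i a b _ <-]; rewrite ?gmul0l ?gmulDl. Qed.

Lemma gmul_sumr (I : Type) (r : seq I) (P : pred I) (f : I -> GA) y :
  gmul y (\sum_(i <- r | P i) f i) = \sum_(i <- r | P i) gmul y (f i).
Proof. by elim/big_rec2: _ => [|i a b _ <-]; rewrite ?gmul0r ?gmulDr. Qed.

Lemma gmul_ee S T : gmul (e S) (e T) =
  if [disjoint S & T] then gscale (gsign F S T) (e (S :|: T)) else 0.
Proof.
apply/ffunP => U; rewrite ffunE (bigD1 S) //= [X in _ + X]big1 ?addr0; last first.
  by move=> S' /negbTE SS; apply: big1 => T' _; rewrite !ffunE SS mulr0 mul0r.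
rewrite big_mkcond (bigD1 T) //= [X in _ + X]big1 ?addr0; last first.
  by move=> T' /negbTE TT; case: ifP => // _; rewrite !ffunE TT mulr0.
rewrite !ffunE !eqxx !mulr1; case: (boolP [disjoint S & T]) => dST;
  rewrite ?andbT ?andbF ?ffunE //.
by rewrite eq_sym; case: (U == _); rewrite ?mulr1 ?mulr0.
Qed.


Lemma dUl S T W : [disjoint S :|: T & W] = [disjoint S & W] && [disjoint T & W].
Proof. by rewrite -!setI_eq0 setIUl setU_eq0. Qed.
Lemma dUr S T W : [disjoint W & S :|: T] = [disjoint W & S] && [disjoint W & T].
Proof. by rewrite -!setI_eq0 setIUr setU_eq0. Qed.

Definition pairs S T := [set p : G * G | [&& p.1 \in S, p.2 \in T &
                                 (enum_rank p.2 < enum_rank p.1)%N]].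
Lemma gsignE S T : gsign F S T = (-1) ^+ #|pairs S T|.
Proof. by []. Qed.

Lemma card_disjU (A B : {set G * G}) : A :&: B = set0 -> #|A :|: B| = (#|A| + #|B|)%N.
Proof. by move=> h; rewrite cardsU h cards0 subn0. Qed.

Lemma gsignUl S T W : [disjoint S & T] ->
  gsign F (S :|: T) W = gsign F S W * gsign F T W.
Proof.
move=> dST; rewrite !gsignE -exprD; congr (_ ^+ _).
have -> : pairs (S :|: T) W = pairs S W :|: pairs T W.
  by apply/setP => p; rewrite !inE; case: (p.1 \in S); case: (p.1 \in T); rewrite /= ?orbb ?orbF.
apply: card_disjU; apply/setP => -[a b]; rewrite !inE /=.
by case: (boolP (a \in S)) => aS //=; rewrite (disjointFr dST aS) /= ?andbF.
Qed.

Lemma gsignUr S T W : [disjoint T & W] ->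
  gsign F S (T :|: W) = gsign F S T * gsign F S W.
Proof.
move=> dTW; rewrite !gsignE -exprD; congr (_ ^+ _).
have -> : pairs S (T :|: W) = pairs S T :|: pairs S W.
  by apply/setP => p; rewrite !inE; case: (p.2 \in T); case: (p.2 \in W); rewrite /= ?andbF ?andbT ?orbF ?orbb.

apply: card_disjU; apply/setP => -[a b]; rewrite !inE /=.
by case: (boolP (b \in T)) => bT; rewrite ?andbF //= (disjointFr dTW bT) !andbF.
Qed.

Lemma gscale0 a : gscale a (0 : GA) = 0.
Proof. by apply/ffunP => U; rewrite !ffunE mulr0. Qed.
Lemma gscaleA a b x : gscale a (gscale b x) = gscale (a * b) x.
Proof. by apply/ffunP => U; rewrite !ffunE mulrA. Qed.

Lemma gassoc_e S T W :
  gmul (gmul (e S) (e T)) (e W) = gmul (e S) (gmul (e T) (e W)).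
Proof.
rewrite !gmul_ee; case: (boolP [disjoint S & T]) => dST;
  case: (boolP [disjoint T & W]) => dTW;
  rewrite ?gmulZl ?gmulZr ?gmul0l ?gmul0r ?gmul_ee ?dUl ?dUr ?dST ?dTW
     ?(negbTE dST) ?(negbTE dTW) ?andbF //=.
- case: (boolP [disjoint S & W]) => dSW; rewrite ?gscale0 //.
  by rewrite !gscaleA gsignUl // gsignUr // setUA; congr gscale; ring.
- by rewrite gscale0.
- by rewrite gscale0.
Qed.



Lemma gscale_sumr a (I : Type) (r : seq I) (P : pred I) (f : I -> GA) :
  gscale a (\sum_(i <- r | P i) f i) = \sum_(i <- r | P i) gscale a (f i).
Proof. by apply/ffunP => U; rewrite !ffunE !sum_ffunE mulr_sumr; apply: eq_bigr => i _; rewrite ffunE. Qed.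

Lemma gmul_expand x y :
  gmul x y = \sum_S \sum_T gscale (x S * y T) (gmul (e S) (e T)).
Proof.
rewrite {1}(expand x) gmul_suml; apply: eq_bigr => S _.
rewrite {1}(expand y) gmul_sumr; apply: eq_bigr => T _.
by rewrite gmulZl gmulZr !gscaleA mulrC.
Qed.

Lemma gassoc x y z : gmul (gmul x y) z = gmul x (gmul y z).
Proof.
have L : gmul (gmul x y) z = \sum_S \sum_T \sum_W
    gscale (x S * y T * z W) (gmul (gmul (e S) (e T)) (e W)).
  rewrite (gmul_expand x y) gmul_suml; apply: eq_bigr => S _.
  rewrite gmul_suml; apply: eq_bigr => T _.
  rewrite gmulZl {1}(expand z) gmul_sumr gscale_sumr; apply: eq_bigr => W _.
  by rewrite gmulZr gscaleA.
have R : gmul x (gmul y z) = \sum_S \sum_T \sum_W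
    gscale (x S * y T * z W) (gmul (e S) (gmul (e T) (e W))).
  rewrite (gmul_expand y z) {1}(expand x) gmul_suml; apply: eq_bigr => S _.
  rewrite gmulZl gmul_sumr gscale_sumr; apply: eq_bigr => T _.
  rewrite gmul_sumr gscale_sumr; apply: eq_bigr => W _.
  by rewrite gmulZr gscaleA mulrA.
rewrite L R; apply: eq_bigr => S _; apply: eq_bigr => T _; apply: eq_bigr => W _.
by rewrite gassoc_e.
Qed.

Lemma gone_e : gone F G = e set0.
Proof. by []. Qed.

Lemma gsign0l T : gsign F set0 T = 1.
Proof.
rewrite gsignE (_ : pairs set0 T = set0) ?cards0 ?expr0 //.
by apply/setP => p; rewrite !inE.
Qed.
Lemma gsign0r T : gsign F T set0 = 1.
Proof.
rewrite gsignE (_ : pairs T set0 = set0) ?cards0 ?expr0 //.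
by apply/setP => p; rewrite !inE andbF.
Qed.

Lemma gscale1 x : gscale 1 x = x.
Proof. by apply/ffunP => U; rewrite ffunE mul1r. Qed.

Lemma gmul1l x : gmul (gone F G) x = x.
Proof.
rewrite gone_e {1}(expand x) gmul_sumr [RHS]expand; apply: eq_bigr => T _.
rewrite gmulZr gmul_ee (_ : [disjoint set0 & T]) ?gsign0l ?set0U ?gscale1 //.
by rewrite -setI_eq0 set0I.
Qed.

Lemma gmul1r x : gmul x (gone F G) = x.
Proof.
rewrite gone_e {1}(expand x) gmul_suml [RHS]expand; apply: eq_bigr => T _.
rewrite gmulZl gmul_ee (_ : [disjoint T & set0]) ?gsign0r ?setU0 ?gscale1 //.
by rewrite -setI_eq0 setI0.
Qed.

Lemma gone_neq0 : gone F G != 0.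
Proof. by apply/eqP => /ffunP /(_ set0); rewrite !ffunE eqxx => /eqP; rewrite oner_eq0. Qed.


Definition swp (p : G * G) := (p.2, p.1).
Lemma swpK : involutive swp. Proof. by case. Qed.

Lemma gsign_swap S T : [disjoint S & T] ->
  gsign F S T * gsign F T S = (-1) ^+ (#|S| * #|T|).
Proof.
move=> dST; rewrite !gsignE -exprD; congr (_ ^+ _).
pose Q := [set p : G * G | [&& p.1 \in S, p.2 \in T &
                                 (enum_rank p.1 < enum_rank p.2)%N]].
have E : pairs T S = swp @^-1: Q.
  by apply/setP => -[a b]; rewrite !inE /= andbCA.
rewrite E card_preimset; last exact: (can_inj swpK).
have E2 : pairs S T :|: Q = setX S T.
  apply/setP => -[a b]; rewrite !inE /=.
  case: (boolP (a \in S)) => aS //=; case: (boolP (b \in T)) => bT //=.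
  rewrite -neq_ltn; apply/negP => /eqP/ord_inj/enum_rank_inj ab.
  by rewrite ab (disjointFr dST aS) in bT.
rewrite -cardsX -E2 card_disjU //.
apply/setP => -[a b]; rewrite !inE /=.
case: (a \in S); case: (b \in T) => //=; rewrite ?andbF //.
by case: ltngtP.
Qed.

Lemma sign_sq n : ((-1) ^+ n : F) * (-1) ^+ n = 1.
Proof. by rewrite -exprD -signr_odd oddD addbb. Qed.

Definition evenb (x : GA) := [forall U : {set G}, odd #|U| ==> (x U == 0)].

Lemma evenP x : reflect (forall U, odd #|U| -> x U = 0) (evenb x).
Proof.
apply: (iffP forallP) => [h U oU|h U]; first by apply/eqP; move: (h U); rewrite oU.
by apply/implyP => /h ->.
Qed.

Lemma gscale0l x : gscale 0 x = 0.
Proof. by apply/ffunP => U; rewrite !ffunE mul0r. Qed.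

Lemma even_central x y : evenb x -> gmul x y = gmul y x.
Proof.
move/evenP => ex; rewrite gmul_expand (gmul_expand y x) exchange_big /=.
apply: eq_bigr => T _; apply: eq_bigr => S _.
case: (boolP (odd #|S|)) => oS; first by rewrite ex // mul0r mulr0 !gscale0l.
rewrite mulrC !gmul_ee disjoint_sym setUC; case: ifP => dTS //.
have := gsign_swap dTS; rewrite mulnC -signr_odd oddM (negbTE oS) /= expr0 => h1.
congr (gscale _ (gscale _ _)).
by rewrite -[LHS]mul1r -[1 in LHS](sign_sq #|pairs T S|) -!gsignE -mulrA h1 mulr1.
Qed.


Lemma even_mul x y : evenb x -> evenb y -> evenb (gmul x y).
Proof.
move/evenP=> ex /evenP ey; apply/evenP => U oU; rewrite ffunE big1 // => S _.
apply: big1 => T /andP[/eqP SU dST].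
case: (boolP (odd #|S|)) => oS; first by rewrite ex ?mulr0 ?mul0r.
have oT : odd #|T|.
  move: oU; rewrite -SU cardsU (_ : S :&: T = set0) ?cards0 ?subn0 ?oddD ?(negbTE oS) //.
  exact: disjoint_setI0.
by rewrite ey // mulr0.
Qed.

Lemma even_add x y : evenb x -> evenb y -> evenb (x + y).
Proof. by move/evenP=> ex /evenP ey; apply/evenP => U oU; rewrite ffunE ex // ey // addr0. Qed.
Lemma even_opp x : evenb x -> evenb (- x).
Proof. by move/evenP=> ex; apply/evenP => U oU; rewrite ffunE ex // oppr0. Qed.
Lemma even_e S : ~~ odd #|S| -> evenb (e S).
Proof.
move=> oS; apply/evenP => U oU; rewrite ffunE; case: eqP => // US.
by rewrite -US oU in oS.
Qed.
Lemma even_one : evenb (gone F G).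
Proof. by rewrite gone_e; apply: even_e; rewrite cards0. Qed.
Lemma even_scale c x : evenb x -> evenb (gscale c x).
Proof. by move/evenP=> ex; apply/evenP => U oU; rewrite ffunE ex // mulr0. Qed.

End GrassBasics.

Section GAlg.
Variables (F : fieldType) (G : finType).
Definition galg : Type := {ffun {set G} -> F}.
HB.instance Definition _ := GRing.Zmodule.on galg.
Definition gm : galg -> galg -> galg := @gmul F G.
Definition go : galg := gone F G.
Fact gm_A : associative gm. Proof. by move=> x y z; rewrite /gm gassoc. Qed.
Fact gm_1l : left_id go gm. Proof. exact: gmul1l. Qed.
Fact gm_1r : right_id go gm. Proof. exact: gmul1r. Qed.
Fact gm_Dl : left_distributive gm +%R. Proof. exact: gmulDl. Qed.
Fact gm_Dr : right_distributive gm +%R. Proof. exact: gmulDr. Qed.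
Fact go_neq0 : go != 0. Proof. exact: gone_neq0. Qed.
HB.instance Definition _ := GRing.Zmodule_isNzRing.Build galg
  gm_A gm_1l gm_1r gm_Dl gm_Dr go_neq0.

Lemma galg_mulE (x y : galg) : x * y = gmul x y. Proof. by []. Qed.
Lemma galg_oneE : (1 : galg) = gone F G. Proof. by []. Qed.

Definition evenp (x : galg) := evenb x.
Fact evenp_subring : subring_closed evenp.
Proof.
split; first exact: even_one.
  by move=> x y ex ey; apply: even_add => //; apply: even_opp.
exact: even_mul.
Qed.
HB.instance Definition _ := GRing.isSubringClosed.Build galg evenp evenp_subring.

Record ev := Ev { evval :> galg; _ : evenp evval }.
HB.instance Definition _ := [isSub for evval].
HB.instance Definition _ := [Choice of ev by <:].
HB.instance Definition _ := [SubChoice_isSubZmodule of ev by <:].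
HB.instance Definition _ := [SubZmodule_isSubNzRing of ev by <:].
Fact ev_mulC : commutative (@GRing.mul ev).
Proof. move=> [x ex] [y ey]; apply: val_inj => /=; exact: even_central. Qed.
HB.instance Definition _ := GRing.PzRing_hasCommutativeMul.Build ev ev_mulC.

Lemma evmulE (x y : ev) : val (x * y) = gmul (val x) (val y). Proof. by []. Qed.
End GAlg.


Section Abstract.
Variables (R : comNzRingType) (V : finType) (t : V -> R) (u : V -> V -> R).
Implicit Types (A B X : {set V}) (i j k l : V) (c d : R).
Hypothesis tu : forall i, t i = u i i.
Hypothesis uR : forall i j j', u i j * u i j' = 0.
Hypothesis uC : forall i i' j, u i j * u i' j = 0.
Hypothesis uX : forall i j k l, u i j * u k l = - (u i l * u k j).

Definition T (A : {set V}) := \prod_(i in A) t i.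
Definition g (c : R) (A : {set V}) := c * T A + \sum_(i in A) T (A :\ i)
  - \sum_(i in A) \sum_(j in A :\ i) u i j * T (A :\ i :\ j).

Lemma tt0 i : t i * t i = 0. Proof. by rewrite tu uR. Qed.
Lemma tuR i j : t i * u i j = 0. Proof. by rewrite tu uR. Qed.
Lemma tuC i j : t j * u i j = 0. Proof. by rewrite tu mulrC uC. Qed.
Lemma T_split k A : k \in A -> T A = t k * T (A :\ k).
Proof. by move=> kA; rewrite /T (big_setD1 _ kA). Qed.
Lemma Tt0 k A : k \in A -> T A * t k = 0.
Proof. by move=> kA; rewrite (T_split kA) mulrAC tt0 mul0r. Qed.
Lemma Tt k A : k \notin A -> T A * t k = T (k |: A).
Proof. by move=> kA; rewrite /T big_setU1 //= mulrC. Qed.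
Lemma TuR0 k l A : k \in A -> T A * u k l = 0.
Proof. by move=> kA; rewrite (T_split kA) mulrAC tuR mul0r. Qed.
Lemma TuC0 k l A : k \in A -> T A * u l k = 0.
Proof. by move=> kA; rewrite (T_split kA) mulrAC tuC mul0r. Qed.
Lemma T0 : T set0 = 1. Proof. by rewrite /T big_set0. Qed.
Lemma T1 k : T [set k] = t k. Proof. by rewrite /T big_set1. Qed.

Lemma inD1 (A : {set V}) i k : k \in A -> i != k -> k \in A :\ i.
Proof. by move=> kA ik; rewrite !inE eq_sym ik kA. Qed.

Lemma gt c k A : k \in A -> g c A * t k = T A.
Proof.
move=> kA; rewrite /g !mulrBl !mulrDl -mulrA Tt0 // mulr0 add0r.
rewrite !mulr_suml (big_setD1 _ kA) /= big1 ?addr0; last first.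
  by move=> i /setD1P [ik iA]; apply: Tt0; apply: inD1.
rewrite big1 ?subr0; first by rewrite mulrC -T_split.
move=> i iA; rewrite mulr_suml; apply: big1 => j /setD1P [ji jA]; rewrite -mulrA.
case: (eqVneq i k) => [->|ik].
  by rewrite [T _ * _]mulrC mulrA [u _ _ * _]mulrC tuR mul0r.
case: (eqVneq j k) => [->|jk].
  by rewrite [T _ * _]mulrC mulrA [u _ _ * _]mulrC tuC mul0r.
by rewrite Tt0 ?mulr0 // !inD1.
Qed.


Lemma notinD1 (A : {set V}) i l : l \notin A -> l \notin A :\ i.
Proof. by move=> lA; rewrite !inE (negbTE lA) andbF. Qed.

Lemma gtl c l X : l \notin X -> g c X * t l = c * T (l |: X)
  + \sum_(i in X) T (l |: (X :\ i))
  - \sum_(i in X) \sum_(j in X :\ i) u i j * T (l |: (X :\ i :\ j)).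
Proof.
move=> lX; rewrite /g !mulrBl !mulrDl -mulrA Tt //; congr (_ + _ - _).
  by rewrite mulr_suml; apply: eq_bigr => i _; rewrite Tt // notinD1.
rewrite mulr_suml; apply: eq_bigr => i _; rewrite mulr_suml; apply: eq_bigr => j _.
by rewrite -mulrA Tt // !notinD1.
Qed.

Lemma gukl c k l X : k \in X ->
  g c X * u k l = \sum_(i in X) u i l * T (X :\ i).
Proof.
move=> kX; rewrite /g !mulrBl !mulrDl -mulrA TuR0 // mulr0 add0r.
rewrite !mulr_suml (big_setD1 _ kX) /= big1 ?addr0; last first.
  by move=> i /setD1P [ik iA]; apply: TuR0; apply: inD1.
rewrite (big_setD1 _ kX) /=.
have -> : (\sum_(j in X :\ k) u k j * T (X :\ k :\ j)) * u k l = 0.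
  by rewrite mulr_suml big1 // => j _; rewrite -mulrA [T _ * _]mulrC mulrA uR mul0r.
rewrite add0r.
rewrite (big_setD1 k kX) /= -sumrN [u k l * _]mulrC; congr (_ + _).
apply: eq_bigr => i /setD1P [ik iX]; rewrite mulr_suml (big_setD1 k); last exact: inD1.
rewrite /= big1 ?addr0; last first.
  move=> j /setD1P [jk /setD1P [ji jX]].
  by rewrite -mulrA TuR0 ?mulr0 // !inD1.
rewrite mulrAC uX -tu mulNr -mulrA -T_split ?opprK //; exact: inD1.
Qed.

Lemma gulk c k l X : k \in X ->
  g c X * u l k = \sum_(j in X) u l j * T (X :\ j).
Proof.
move=> kX; rewrite /g !mulrBl !mulrDl -mulrA TuC0 // mulr0 add0r.
rewrite !mulr_suml (big_setD1 _ kX) /= big1 ?addr0; last first.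
  by move=> i /setD1P [ik iA]; apply: TuC0; apply: inD1.
rewrite (big_setD1 _ kX) /= [Z in _ - (_ + Z)]big1 ?addr0; last first.
  move=> i /setD1P [ik iX]; rewrite mulr_suml; apply: big1 => j /setD1P [ji jX].
  case: (eqVneq j k) => [->|jk].
    by rewrite mulrAC uC mul0r.
  by rewrite -mulrA TuC0 ?mulr0 // !inD1.
rewrite (big_setD1 k kX) /= [u l k * _]mulrC mulr_suml -sumrN; congr (_ + _).
apply: eq_bigr => j /setD1P [jk jX].
rewrite mulrAC uX -tu mulNr opprK mulrAC mulrC; congr (_ * _).
rewrite (T_split (k := k) (A := X :\ j)); last by apply: inD1.
congr (_ * T _); apply/setP => x; rewrite !inE; by case: (x == k); case: (x == j).
Qed.


Lemma set2D1l k l : k != l -> [set k; l] :\ k = [set l].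
Proof.
move=> kl; apply/setP => x; rewrite !inE.
by case: (eqVneq x k) => [->|xk]; rewrite ?eqxx ?(negbTE kl) ?(negbTE xk).
Qed.
Lemma set2D1r k l : k != l -> [set k; l] :\ l = [set k].
Proof.
move=> kl; apply/setP => x; rewrite !inE.
by case: (eqVneq x l) => [->|xl]; rewrite ?eqxx ?(negbTE xl) ?orbF ?andbT // eq_sym (negbTE kl).
Qed.
Lemma set1D1 k : [set k] :\ k = set0.
Proof. by apply/setP => x; rewrite !inE; case: eqP. Qed.

Lemma g_pair c k l : k != l ->
  g c [set k; l] = c * (t k * t l) + t k + t l - u k l - u l k.
Proof.
move=> kl; have kl1 : k \notin [set l] by rewrite inE.
rewrite /g /T big_setU1 //= big_set1 -/(T _).
rewrite big_setU1 //= big_set1 big_setU1 //= big_set1.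
rewrite set2D1l // set2D1r // !big_set1 !set1D1 big_set0; ring.
Qed.

Lemma sD k l X : k != l -> (l |: X) :\ k = l |: (X :\ k).
Proof.
move=> kl; apply/setP => x; rewrite !inE.
case: (eqVneq x k) => [->|xk] /=; last by [].
by rewrite (negbTE kl).
Qed.

Lemma leaf c d k l X : k \in X -> l \notin X ->
  g c X * g d [set k; l] = g (c + d) (l |: X).
Proof.
move=> kX lX; have kl : k != l by apply: contraNneq lX => <-.
have E : g c X * g d [set k; l] = d * (g c X * t k * t l) + g c X * t k
   + g c X * t l - g c X * u k l - g c X * u l k by rewrite g_pair //; ring.
rewrite E gt // Tt // gtl // gukl // gulk //.
rewrite /g big_setU1 //= big_setU1 //= !setU1K //.
have E1 : \sum_(i in X) T ((l |: X) :\ i) = \sum_(i in X) T (l |: (X :\ i)).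
  by apply: eq_bigr => i iX; rewrite sD //; apply: contraNneq lX => <-.
have E2 : \sum_(i in X) \sum_(j in (l |: X) :\ i) u i j * T ((l |: X) :\ i :\ j)
   = \sum_(i in X) (u i l * T (X :\ i)
       + \sum_(j in X :\ i) u i j * T (l |: (X :\ i :\ j))).
  apply: eq_bigr => i iX; have il : i != l by apply: contraNneq lX => <-.
  rewrite sD // big_setU1 ?notinD1 //= setU1K ?notinD1 //; congr (_ + _).
  by apply: eq_bigr => j /setD1P [ji jX]; rewrite sD //; apply: contraNneq lX => <-.
rewrite E1 E2 big_split /=; ring.
Qed.

Lemma g_single d k : g d [set k] = d * t k + 1.
Proof. by rewrite /g !big_set1 set1D1 big_set0 T0 T1 subr0. Qed.

Lemma mixed c d k A B : A :&: B = [set k] ->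
  g c A * g d B = g (c + d) (A :|: B).
Proof.
have [n] := ubnP #|B|; elim: n B d => // n IH B d lt AB.
have : k \in A :&: B by rewrite AB set11.
rewrite inE => /andP [kA kB].
case: (boolP (B \subset [set k])) => sB.
  have -> : B = [set k] by apply/eqP; rewrite eqEsubset sB sub1set kB.
  rewrite g_single mulrDr mulr1 mulrCA gt // (setUidPl _); last by rewrite sub1set.
  by rewrite /g; ring.
case/subsetPn: sB => l lB; rewrite inE => lk.
have lA : l \notin A.
  apply: contra lk => lA; have : l \in A :&: B by rewrite inE lA lB.
  by rewrite AB inE.
have kB0 : k \in B :\ l by apply: inD1.
have eB : g d B = g d (B :\ l) * g 0 [set k; l].
  by rewrite leaf ?addr0 ?setD1K // !inE eqxx.
have AB0 : A :&: (B :\ l) = [set k].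
  apply/setP => x; rewrite !inE; case: (eqVneq x l) => [->|xl] /=.
    by rewrite andbF (negbTE lk).
  by move/setP: AB => /(_ x); rewrite !inE.
have ltB : (#|B :\ l| < n)%N by move: lt; rewrite (cardsD1 l B) lB add1n ltnS.
rewrite eB mulrA IH // leaf ?addr0; last 2 first.
- by rewrite inE kA.
- by rewrite !inE negb_or lA /= eqxx.
congr (g _ _); apply/setP => x; rewrite !inE; case: eqP => // ->.
by rewrite lB orbT.
Qed.

Lemma sq c d k l : k != l -> g c [set k; l] * g d [set k; l] = 0.
Proof.
move=> kl; rewrite !g_pair //.
have aa : t k * t k = 0 by apply: tt0.
have bb : t l * t l = 0 by apply: tt0.
have ax : t k * u k l = 0 by apply: tuR.
have bx : t l * u k l = 0 by apply: tuC.
have ay : t k * u l k = 0 by apply: tuC.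
have by0 : t l * u l k = 0 by apply: tuR.
have xx : u k l * u k l = 0 by apply: uR.
have yy : u l k * u l k = 0 by apply: uR.
have xy : u k l * u l k = - (t k * t l) by rewrite uX -!tu.
move: (t k) (t l) (u k l) (u l k) aa bb ax bx ay by0 xx yy xy => a b x y aa bb ax bx ay by0 xx yy xy.
have -> : (c * (a * b) + a + b - x - y) * (d * (a * b) + a + b - x - y) =
  c * d * (a * a) * (b * b) + (c + d) * ((a * a) * b + a * (b * b) - b * (a * x) - b * (a * y))
  + a * a + b * b + x * x + y * y + 2%:R * (a * b + x * y)
  - 2%:R * (a * x + a * y + b * x + b * y) by ring.
rewrite aa bb ax bx ay by0 xx yy xy.
by rewrite !mulr0 !mul0r !addr0 subrr !subr0 !mulr0 !addr0 subrr mulr0 add0r subr0.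

Qed.

Lemma ge2 c d k l A B : k != l -> k \in A -> l \in A -> k \in B -> l \in B ->
  g c A * g d B = 0.
Proof.
move=> kl kA lA kB lB.
have e X e0 : k \in X -> l \in X -> g e0 X = g e0 (X :\ l) * g 0 [set k; l].
  move=> kX lX; rewrite leaf ?addr0 ?setD1K //.
    by rewrite inD1 // eq_sym.
  by rewrite !inE eqxx.
by rewrite (e A) // (e B) // mulrACA sq // mulr0.
Qed.

End Abstract.

Section Glue.
Variables (F : fieldType) (V : finType).
Local Notation GL := (galg F (bool * V)%type).

Definition gg (a : (bool * V)%type) : GL := ggen F a.

Lemma gg_e (a : (bool * V)%type) : gg a = e F [set a]. Proof. by []. Qed.

Lemma gen_sq (a : (bool * V)%type) : gg a * gg a = 0.
Proof. by rewrite galg_mulE !gg_e gmul_ee disjoints1 inE eqxx. Qed.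

Lemma gen_anti (a b : (bool * V)%type) : gg a * gg b = - (gg b * gg a).
Proof.
case: (eqVneq a b) => [->|ab]; first by rewrite gen_sq oppr0.
rewrite !galg_mulE !gg_e !gmul_ee !disjoints1 !inE (negbTE ab) eq_sym (negbTE ab) /=.
have dab : [disjoint [set a] & [set b]] by rewrite disjoints1 inE.
have := gsign_swap F dab; rewrite !cards1 expr1 => h.
rewrite setUC; apply/ffunP => U; rewrite !ffunE.
have -> : gsign F [set b] [set a] = - gsign F [set a] [set b].
  have s2 : gsign F [set a] [set b] * gsign F [set a] [set b] = 1 by rewrite gsignE sign_sq.
  by rewrite -[LHS]mul1r -s2 -mulrA h mulrN1.
by rewrite mulNr opprK.
Qed.

Lemma swap_mid (a b c d : (bool * V)%type) :
  (gg a * gg b) * (gg c * gg d) = - ((gg a * gg c) * (gg b * gg d)).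
Proof. by rewrite mulrA -(mulrA _ (gg b)) gen_anti mulrN mulNr !mulrA. Qed.

Definition U0 (i j : V) : GL := gg (true, i) * gg (false, j).

Lemma evenU i j : evenp (U0 i j).
Proof.
rewrite /U0 /evenp galg_mulE !gg_e gmul_ee.
case: ifP => d; last by apply/evenP => U _; rewrite ffunE.
apply: even_scale; apply: even_e; rewrite cards2.
by move: d; rewrite disjoints1 inE => ->.
Qed.

Lemma U0R i j j' : U0 i j * U0 i j' = 0.
Proof. by rewrite /U0 swap_mid gen_sq mul0r oppr0. Qed.
Lemma U0C i i' j : U0 i j * U0 i' j = 0.
Proof. by rewrite /U0 swap_mid gen_sq mulr0 oppr0. Qed.
Lemma U0X i j k l : U0 i j * U0 k l = - (U0 i l * U0 k j).
Proof. by rewrite /U0 swap_mid [in RHS]swap_mid (gen_anti (false, l)) mulrN !opprK. Qed.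

Definition uE (i j : V) : ev F (bool * V)%type := Ev (evenU i j).
Definition tE (i : V) : ev F (bool * V)%type := uE i i.

Lemma uER i j j' : uE i j * uE i j' = 0.
Proof. by apply: val_inj; exact: U0R. Qed.
Lemma uEC i i' j : uE i j * uE i' j = 0.
Proof. by apply: val_inj; exact: U0C. Qed.
Lemma uEX i j k l : uE i j * uE k l = - (uE i l * uE k j).
Proof. by apply: val_inj; exact: U0X. Qed.


Definition scE (c : F) : ev F (bool * V)%type := Ev (even_scale c (even_one F (bool * V)%type)).

Lemma scED c d : scE c + scE d = scE (c + d).
Proof. by apply: val_inj; apply/ffunP => U; rewrite /= !ffunE mulrDl. Qed.

Lemma valD (x y : ev F (bool * V)%type) : val (x + y) = val x + val y. Proof. by []. Qed.
Lemma valB (x y : ev F (bool * V)%type) : val (x - y) = val x - val y. Proof. by []. Qed.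
Lemma valM (x y : ev F (bool * V)%type) : val (x * y) = gmul (val x) (val y). Proof. by []. Qed.
Lemma val_sum (I : Type) (r : seq I) (P : pred I) (f : I -> ev F (bool * V)%type) :
  val (\sum_(i <- r | P i) f i) = \sum_(i <- r | P i) val (f i).
Proof. exact: (big_morph val valD (erefl (val 0))). Qed.
Lemma val_prod (I : Type) (r : seq I) (P : pred I) (f : I -> ev F (bool * V)%type) :
  val (\prod_(i <- r | P i) f i) = \prod_(i <- r | P i) (val (f i) : galg F (bool * V)%type).
Proof. exact: (big_morph val (fun x y => erefl (val (x * y))) (erefl (val 1))). Qed.

Lemma valT A : val (T tE A) = tau F A.
Proof. by rewrite /T val_prod. Qed.

Lemma fAE lam A : fA lam A = val (g tE uE (scE (lam * (1 - #|A|%:R))) A).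
Proof.
rewrite /g valB valD valM valT val_sum val_sum /= gmulZl gmul1l /fA.
congr (_ + _ - _).
  by apply: eq_bigr => i _; rewrite valT.
apply: eq_bigr => i _; rewrite val_sum; apply: eq_big => [j|j _].
  by rewrite !inE andbC.
by rewrite valM valT.
Qed.

End Glue.

Lemma scal (K : numFieldType) (a b : nat) (l1 l2 : K) : (0 < a)%N -> (0 < b)%N ->
  l1 * (1 - a%:R) + l2 * (1 - b%:R) = ((a%:R - 1) * l1 + (b%:R - 1) * l2)
     / (a%:R + b%:R - 2) * (1 - (a + b - 1)%N%:R).
Proof.
move=> a0 b0; rewrite natrB ?natrD; last by lia.
have -> : (1 - (a%:R + b%:R - 1%:R) : K) = - (a%:R + b%:R - 2) by ring.
case: (eqVneq (a%:R + b%:R - 2 : K) 0) => D.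
  rewrite D oppr0 mulr0.
  have : (a + b = 2)%N.
    by apply/eqP; rewrite -(eqr_nat K) natrD -subr_eq0 D.
  move=> h; have [-> ->] : a = 1%N /\ b = 1%N by lia.
  by rewrite subrr !mulr0 addr0.
by field.
Qed.


Unset Implicit Arguments.
Set Strict Implicit.

Theorem lemma4p1 (R : realType) (V : finType) (A B : {set V}) (lam lam' : R[i]) :
  A :&: B != set0 ->
  let lam'' := ((#|A|%:R - 1) * lam + (#|B|%:R - 1) * lam')
                 / (#|A|%:R + #|B|%:R - 2) in
  (#|A :&: B| = 1%N ->
     gmul (fA lam A) (fA lam B) = fA lam (A :|: B)
     /\ gmul (fA lam A) (fA lam' B) = fA lam'' (A :|: B))
  /\
  ((2 <= #|A :&: B|)%N ->
     gmul (fA lam A) (fA lam B) = 0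
     /\ gmul (fA lam A) (fA lam' B) = 0).
Proof.
move=> nAB lam''.
have [x xA xB] : exists2 x, x \in A & x \in B.
  by case/set0Pn: nAB => x; rewrite inE => /andP[]; exists x.
have hA : (0 < #|A|)%N by apply/card_gt0P; exists x.
have hB : (0 < #|B|)%N by apply/card_gt0P; exists x.
have tu : forall i : V, tE R[i] i = uE R[i] i i by [].
have mx := mixed tu (@uER R[i] V) (@uEC R[i] V) (@uEX R[i] V).
have g2 := ge2 tu (@uER R[i] V) (@uEC R[i] V) (@uEX R[i] V).
have key : forall l1 l2 : R[i], gmul (fA l1 A) (fA l2 B) =
   val (g (@tE R[i] V) (@uE R[i] V) (@scE R[i] V (l1 * (1 - #|A|%:R))) A *
        g (@tE R[i] V) (@uE R[i] V) (@scE R[i] V (l2 * (1 - #|B|%:R))) B).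
  by move=> l1 l2; rewrite !fAE.
split.
  move=> h1; have [k Ak] : exists k, A :&: B = [set k] by apply/cards1P; rewrite h1.
  have cU : #|A :|: B| = (#|A| + #|B| - 1)%N by have := cardsUI A B; rewrite h1; lia.
  have e1 : lam * (1 - #|A|%:R) + lam * (1 - #|B|%:R)
      = lam * (1 - (#|A| + #|B| - 1)%N%:R).
    rewrite natrB ?natrD; last by lia.
    ring.
  have e2 : lam * (1 - #|A|%:R) + lam' * (1 - #|B|%:R)
      = lam'' * (1 - (#|A| + #|B| - 1)%N%:R) by exact: scal.
  rewrite !key !(mx _ _ _ _ _ Ak) !scED !fAE cU e1 e2.
  by split.
move=> h2; have : (1 < #|A :&: B|)%N by [].
case/card_gt1P => k [l [kAB lAB kl]].
move: kAB lAB; rewrite !inE => /andP[kA kB] /andP[lA lB].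
by rewrite !key !(g2 _ _ k l) .
Qed.
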